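(* Every quaternary matrix $M$ that contains a cycle of length at least $6$ contains a $2\times 2$, $2\times 3$, or $3\times 2$ submatrix that is not a weak lonesum matrix.
   Context: A quaternary matrix has entries in $\{0,1,2,3\}$; a $q$-ary matrix has entries in $\{0,\ldots,q-1\}$. The structure vector of a $q$-ary vector $v=(v_1,\ldots,v_n)$ is $(a_0,\ldots,a_{q-1})$ with $a_k=|\{i: v_i=k\}|$. A $q$-ary $m\times n$ matrix is a weak lonesum matrix if no other $q$-ary $m\times n$ matrix has the same row structure vectors and column structure vectors. In a matrix $M$, a path is a sequence $(M_{i_1,j_1},\ldots,M_{i_k,j_k})$ of entries at pairwise distinct positions such that: (1) for each $l\le k-1$, $i_l=i_{l+1}$ or $j_l=j_{l+1}$; (2) for each $l\le k-2$, $|\{i_l,i_{l+1},i_{l+2}\}|\ge2$ and $|\{j_l,j_{l+1},j_{l+2}\}|\ge 2$; (3) there are two distinct values $a,b$ with the entries' values being $(a,b,a,b,\ldots)$ alternating. The path is a cycle of length $k$ if, setting $(i_{k+1},j_{k+1})=(i_1,j_1)$ and $(i_{k+2},j_{k+2})=(i_2,j_2)$, the extended sequence of $k+2$ entries also satisfies conditions (1)–(3). A submatrix is formed by the entries in the intersection of chosen rows and chosen columns. *)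

(* Defs.v *)
From mathcomp Require Import all_boot all_order all_algebra.
Set Implicit Arguments. Unset Strict Implicit. Unset Printing Implicit Defensive.

(* A q-ary m x n matrix is an element of 'M['I_q]_(m, n). *)

Definition struct_vec (q n : nat) (v : 'I_n -> 'I_q) : {ffun 'I_q -> nat} :=
  [ffun k => #|[pred j | v j == k]|].

Definition row_sv (q m n : nat) (M : 'M['I_q]_(m, n)) (i : 'I_m) :=
  struct_vec (fun j => M i j).
Definition col_sv (q m n : nat) (M : 'M['I_q]_(m, n)) (j : 'I_n) :=
  struct_vec (fun i => M i j).

Definition weak_lonesum (q m n : nat) (M : 'M['I_q]_(m, n)) : Prop :=
  forall N : 'M['I_q]_(m, n),
    (forall i, row_sv N i = row_sv M i) ->
    (forall j, col_sv N j = col_sv M j) -> N = M.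

Definition same_line (m n : nat) (p p' : 'I_m * 'I_n) : bool :=
  (p.1 == p'.1) || (p.2 == p'.2).

Definition path_cond1 (m n : nat) (s : seq ('I_m * 'I_n)) : bool :=
  all (fun pr => same_line pr.1 pr.2) (zip s (behead s)).

Definition path_cond2 (m n : nat) (s : seq ('I_m * 'I_n)) : bool :=
  all (fun t : ('I_m * 'I_n) * (('I_m * 'I_n) * ('I_m * 'I_n)) =>
         let: (a, (b, c)) := t in
         ~~ ((a.1 == b.1) && (b.1 == c.1)) && ~~ ((a.2 == b.2) && (b.2 == c.2)))
      (zip s (zip (behead s) (behead (behead s)))).

Definition path_cond3 (q m n : nat) (M : 'M['I_q]_(m, n))
    (s : seq ('I_m * 'I_n)) : Prop :=
  exists a b : 'I_q, a != b /\
    [seq M p.1 p.2 | p <- s] =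
    [seq (if odd l then b else a) | l <- iota 0 (size s)].

Definition path_conds (q m n : nat) (M : 'M['I_q]_(m, n))
    (s : seq ('I_m * 'I_n)) : Prop :=
  path_cond1 s /\ path_cond2 s /\ path_cond3 M s.

Definition is_path (q m n : nat) (M : 'M['I_q]_(m, n))
    (s : seq ('I_m * 'I_n)) : Prop :=
  uniq s /\ path_conds M s.

(* A cycle (of length size s): a path such that the extended sequence
   (appending the first two entries again) also satisfies (1)-(3). *)
Definition is_cycle (q m n : nat) (M : 'M['I_q]_(m, n))
    (s : seq ('I_m * 'I_n)) : Prop :=
  is_path M s /\ path_conds M (s ++ take 2 s).

Definition strictly_incr (k m : nat) (f : 'I_k -> 'I_m) : Prop :=
  forall x y : 'I_k, x < y -> f x < f y.

Definition has_non_wl_submatrix (q m n : nat) (M : 'M['I_q]_(m, n))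
    (p r : nat) : Prop :=
  exists (f : 'I_p -> 'I_m) (g : 'I_r -> 'I_n),
    strictly_incr f /\ strictly_incr g /\ ~ weak_lonesum (mxsub f g M).

(* Main.v *)
Require Import Defs.
From mathcomp Require Import all_boot all_order all_algebra.
From mathcomp Require Import all_fingroup.
From Stdlib Require Import Lia Classical.
Set Implicit Arguments. Unset Strict Implicit. Unset Printing Implicit Defensive.
Ltac nlia := rewrite -?plusE -?minusE -?multE; lia.

Lemma sv_ext q n (v w : 'I_n -> 'I_q) : (forall j, v j = w j) ->
  struct_vec v = struct_vec w.
Proof. by move=> E; apply/ffunP=> k; rewrite !ffunE; apply: eq_card => j; rewrite !inE E. Qed.

Lemma sv_perm q n (v : 'I_n -> 'I_q) (s : {perm 'I_n}) :
  struct_vec (fun j => v (s j)) = struct_vec v.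
Proof.
apply/ffunP=> k; rewrite !ffunE.
rewrite -(card_image (@perm_inj _ s)); apply: eq_card => j.
apply/imageP/idP => [[i Hi ->]|Hj] //.
by exists ((s^-1)%g j); rewrite ?inE ?permKV.
Qed.

Lemma wl_perm q p r (A : 'M['I_q]_(p, r)) (s : {perm 'I_p}) (s' : {perm 'I_r}) :
  ~ weak_lonesum A -> ~ weak_lonesum (\matrix_(i, j) A (s i) (s' j))%R.
Proof.
move=> nA wA; apply: nA => N HR HC.
pose N' := (\matrix_(i, j) N (s i) (s' j))%R.
have E := wA N'.
have: N' = (\matrix_(i, j) A (s i) (s' j))%R.
  apply: E => [i|j].
    rewrite /row_sv.
    transitivity (struct_vec (fun j => N (s i) j)).
      by rewrite -[RHS](sv_perm _ s'); apply: sv_ext => j; rewrite mxE.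
    transitivity (struct_vec (fun j => A (s i) j)); first exact: HR.
    by rewrite /row_sv -[LHS](sv_perm _ s'); apply: sv_ext => j; rewrite mxE.
  rewrite /col_sv.
  transitivity (struct_vec (fun i => N i (s' j))).
    by rewrite -[RHS](sv_perm _ s); apply: sv_ext => i; rewrite mxE.
  transitivity (struct_vec (fun i => A i (s' j))); first exact: HC.
  by rewrite /col_sv -[LHS](sv_perm _ s); apply: sv_ext => i; rewrite mxE.
move=> EN; apply/matrixP => i j.
have := congr1 (fun X : 'M_(p, r) => X ((s^-1)%g i) ((s'^-1)%g j)) EN.
by rewrite /= !mxE !permKV.
Qed.

Lemma sort_perm p m (f : 'I_p -> 'I_m) : injective f ->
  exists s : {perm 'I_p}, strictly_incr (fun x => f (s x)).
Proof.
move=> finj.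
have rank_lt i : #|[pred j | f j < f i]| < p.
  suff : #|[pred j | f j < f i]| < #|'I_p| by rewrite card_ord.
  apply: proper_card; apply/properP; split.
    by apply/subsetP.
  by exists i => //; rewrite inE ltnn.
pose rk i := Ordinal (rank_lt i).
have rk_mono i j : f i < f j -> rk i < rk j.
  move=> lt; rewrite /=; apply: proper_card; apply/properP; split.
    by apply/subsetP => k; rewrite !inE => /ltn_trans; apply.
  by exists i; rewrite !inE ?ltnn.
have rk_inj : injective rk.
  move=> i j E; apply: finj; apply/val_inj/eqP; rewrite eqn_leq.
  apply/andP; split; rewrite leqNgt; apply/negP => /rk_mono; rewrite E ltnn //.
exists ((perm rk_inj)^-1)%g => x y lt.
set i := _ x; set j := _ y.
have ri : rk i = x by rewrite /i -permE permKV.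
have rj : rk j = y by rewrite /j -permE permKV.
case: (ltngtP (f i) (f j)) => // [/rk_mono|/val_inj/finj E].
  by rewrite ri rj ltnNge (ltnW lt).
by move: lt; rewrite -ri -rj E ltnn.
Qed.

Lemma nonwl_inj m n p r (M : 'M['I_4]_(m, n)) (f : 'I_p -> 'I_m) (g : 'I_r -> 'I_n) :
  injective f -> injective g -> ~ weak_lonesum (mxsub f g M) ->
  has_non_wl_submatrix M p r.
Proof.
move=> fi gi nw.
have [s Hs] := sort_perm fi; have [s' Hs'] := sort_perm gi.
exists (fun x => f (s x)), (fun x => g (s' x)); split => //; split => //.
have -> : mxsub (fun x => f (s x)) (fun x => g (s' x)) M =
          (\matrix_(i, j) (mxsub f g M) (s i) (s' j))%R.
  by apply/matrixP => i j; rewrite !mxE.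
exact: wl_perm.
Qed.
Lemma card3 (P : pred 'I_3) : #|[pred j | P j]| =
  P (@Ordinal 3 0 isT) + P (@Ordinal 3 1 isT) + P (@Ordinal 3 2 isT).
Proof.
rewrite -sum1_card big_mkcond /= !big_ord_recl big_ord0 /=.
have -> : lift ord0 (ord0 : 'I_2) = Ordinal (isT : 1 < 3) by apply: val_inj.
have -> : lift ord0 (lift ord0 (ord0 : 'I_1)) = Ordinal (isT : 2 < 3) by apply: val_inj.
have -> : (ord0 : 'I_3) = Ordinal (isT : 0 < 3) by apply: val_inj.
rewrite !inE.
by case: (P _); case: (P _); case: (P _).
Qed.

Lemma card2 (P : pred 'I_2) : #|[pred j | P j]| =
  P (@Ordinal 2 0 isT) + P (@Ordinal 2 1 isT).
Proof.
rewrite -sum1_card big_mkcond /= !big_ord_recl big_ord0 /=.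
have -> : lift ord0 (ord0 : 'I_1) = Ordinal (isT : 1 < 2) by apply: val_inj.
have -> : (ord0 : 'I_2) = Ordinal (isT : 0 < 2) by apply: val_inj.
rewrite !inE.
by case: (P _); case: (P _).
Qed.

Lemma nonwl_22 m n (M : 'M['I_4]_(m, n)) r1 r2 c1 c2 a b :
  r1 != r2 -> c1 != c2 -> a != b ->
  M r1 c1 = a -> M r1 c2 = b -> M r2 c1 = b -> M r2 c2 = a ->
  has_non_wl_submatrix M 2 2.
Proof.
move=> r12 c12 ab H11 H12 H21 H22.
pose f (i : 'I_2) := if val i == 0 then r1 else r2.
pose g (i : 'I_2) := if val i == 0 then c1 else c2.
apply: (@nonwl_inj _ _ _ _ M f g).
- move=> [[|[|i]] Hi] [[|[|j]] Hj] //= E; rewrite /f /= in E;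
    try (by apply: val_inj); by rewrite E eqxx in r12.
- move=> [[|[|i]] Hi] [[|[|j]] Hj] //= E; rewrite /g /= in E;
    try (by apply: val_inj); by rewrite E eqxx in c12.
move=> W.
pose N : 'M['I_4]_(2, 2) := (\matrix_(i, j) if val i == val j then b else a)%R.
have := W N.
have EN : N <> mxsub f g M.
  move/matrixP => /(_ ord0 ord0); rewrite !mxE /f /g /= H11 => E.
  by rewrite E eqxx in ab.
move=> H; apply: EN; apply: H.
- move=> [[|[|i]] Hi] //; apply/ffunP => k; rewrite !ffunE !card2 !mxE /f /g /=;
  by rewrite ?H11 ?H12 ?H21 ?H22; case: (a == k); case: (b == k).
- move=> [[|[|i]] Hi] //; apply/ffunP => k; rewrite !ffunE !card2 !mxE /f /g /=;
  by rewrite ?H11 ?H12 ?H21 ?H22; case: (a == k); case: (b == k).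
Qed.

Lemma nonwl_23 m n (M : 'M['I_4]_(m, n)) r1 r2 c1 c2 c3 a b x :
  r1 != r2 -> c1 != c2 -> c1 != c3 -> c2 != c3 -> a != b ->
  M r1 c1 = a -> M r1 c2 = b -> M r1 c3 = x ->
  M r2 c1 = x -> M r2 c2 = a -> M r2 c3 = b ->
  has_non_wl_submatrix M 2 3.
Proof.
move=> r12 c12 c13 c23 ab H11 H12 H13 H21 H22 H23.
pose f (i : 'I_2) := if val i == 0 then r1 else r2.
pose g (i : 'I_3) := if val i == 0 then c1 else if val i == 1 then c2 else c3.
apply: (@nonwl_inj _ _ _ _ M f g).
- move=> [[|[|i]] Hi] [[|[|j]] Hj] //= E; rewrite /f /= in E;
    try (by apply: val_inj); by rewrite E eqxx in r12.
- move=> [[|[|[|i]]] Hi] [[|[|[|j]]] Hj] //= E; rewrite /g /= in E;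
    try (by apply: val_inj);
    by rewrite E eqxx in c12 c13 c23.
move=> W.
pose N : 'M['I_4]_(2, 3) :=
  (\matrix_(i, j) nth a (if val i == 0 then [:: x; a; b] else [:: a; b; x]) j)%R.
have := W N.
have EN : N <> mxsub f g M.
  move/matrixP => /(_ ord0 (@Ordinal 3 1 isT)); rewrite !mxE /f /g /= H12 => E.
  by rewrite E eqxx in ab.
move=> H; apply: EN; apply: H.
- move=> [[|[|i]] Hi] //; apply/ffunP => k; rewrite !ffunE !card3 !mxE /f /g /=;
  by rewrite ?H11 ?H12 ?H13 ?H21 ?H22 ?H23; case: (a == k); case: (b == k); case: (x == k).
- move=> [[|[|[|i]]] Hi] //; apply/ffunP => k; rewrite !ffunE !card2 !mxE /f /g /=;
  by rewrite ?H11 ?H12 ?H13 ?H21 ?H22 ?H23; case: (a == k); case: (b == k); case: (x == k).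
Qed.

Lemma nonwl_32 m n (M : 'M['I_4]_(m, n)) r1 r2 r3 c1 c2 a b x :
  r1 != r2 -> r1 != r3 -> r2 != r3 -> c1 != c2 -> a != b ->
  M r1 c1 = a -> M r2 c1 = b -> M r3 c1 = x ->
  M r1 c2 = x -> M r2 c2 = a -> M r3 c2 = b ->
  has_non_wl_submatrix M 3 2.
Proof.
move=> r12 r13 r23 c12 ab H11 H21 H31 H12 H22 H32.
pose f (i : 'I_3) := if val i == 0 then r1 else if val i == 1 then r2 else r3.
pose g (i : 'I_2) := if val i == 0 then c1 else c2.
apply: (@nonwl_inj _ _ _ _ M f g).
- move=> [[|[|[|i]]] Hi] [[|[|[|j]]] Hj] //= E; rewrite /f /= in E;
    try (by apply: val_inj);
    by rewrite E eqxx in r12 r13 r23.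
- move=> [[|[|i]] Hi] [[|[|j]] Hj] //= E; rewrite /g /= in E;
    try (by apply: val_inj); by rewrite E eqxx in c12.
move=> W.
pose N : 'M['I_4]_(3, 2) :=
  (\matrix_(i, j) nth a (if val j == 0 then [:: x; a; b] else [:: a; b; x]) i)%R.
have := W N.
have EN : N <> mxsub f g M.
  move/matrixP => /(_ (@Ordinal 3 1 isT) ord0); rewrite !mxE /f /g /= H21 => E.
  by rewrite E eqxx in ab.
move=> H; apply: EN; apply: H.
- move=> [[|[|[|i]]] Hi] //; apply/ffunP => k; rewrite !ffunE !card2 !mxE /f /g /=;
  by rewrite ?H11 ?H12 ?H31 ?H21 ?H22 ?H32; case: (a == k); case: (b == k); case: (x == k).
- move=> [[|[|i]] Hi] //; apply/ffunP => k; rewrite !ffunE !card3 !mxE /f /g /=;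
  by rewrite ?H11 ?H12 ?H31 ?H21 ?H22 ?H32; case: (a == k); case: (b == k); case: (x == k).
Qed.
Lemma pig (a b c u v : 'I_4) : a != b -> a != c -> b != c ->
  u != a -> u != b -> u != c -> v != a -> v != b -> v != c -> u = v.
Proof.
move: a b c u v.
by move=> [[|[|[|[|?]]]] ?] [[|[|[|[|?]]]] ?] [[|[|[|[|?]]]] ?] [[|[|[|[|?]]]] ?] [[|[|[|[|?]]]] ?] //=; try (by []); move=> *; apply: val_inj.
Qed.

Record walk m n (M : 'M['I_4]_(m, n)) (a b : 'I_4) (t : nat)
  (R : nat -> 'I_m) (C : nat -> 'I_n) : Prop := Walk {
  w_ab : a != b; w_t0 : 0 < t; w_pR : forall i, R (i + t) = R i;
  w_pC : forall i, C (i + t) = C i;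
  w_a : forall i, M (R i) (C i) = a; w_b : forall i, M (R i) (C i.+1) = b }.

Lemma modS_cases k d : 0 < d ->
  (k.+1 %% d = (k %% d).+1 /\ (k %% d).+1 < d) \/ (k.+1 %% d = 0 /\ (k %% d).+1 = d).
Proof.
move=> d0; have := modnS k d; case H: (d %| k.+1) => E.
  right; split => //.
  have Hd : d %| (k %% d).+1.
    by move: H; rewrite {1}(divn_eq k d) -addnS dvdn_addr // dvdn_mull.
  apply/eqP; rewrite eqn_leq ltn_pmod //=.
  by apply: dvdn_leq.
left; split => //; rewrite -E ltn_pmod //.
Qed.

Section Walk.
Variables (m n : nat) (M : 'M['I_4]_(m, n)).

Lemma walk_neq a b t R C : walk M a b t R C ->
  forall i, R i != R i.+1 /\ C i != C i.+1.
Proof.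
case=> ab t0 pR pC Ha Hb i; split; apply/negP => /eqP E.
  by have := Hb i; rewrite E Ha => /eqP; rewrite (negbTE ab).
by have := Hb i; rewrite -E Ha => /eqP; rewrite (negbTE ab).
Qed.

Lemma walk_chord t
  (IH : forall t', t' < t -> forall a b R C, ~ walk M a b t' R C)
  a b R C : walk M a b t R C ->
  forall i s, 2 <= s -> s < t ->
  M (R i) (C (i + s)) != a /\ M (R i) (C (i + s)) != b.
Proof.
move=> W; case: W => ab t0 pR pC Ha Hb i s s2 st; split; apply/negP => /eqP E.
- (* chord a : walk of length s *)
  pose R' k := R (i + k %% s).
  pose C' k := if k %% s == 0 then C (i + s) else C (i + k %% s).
  apply: (IH s st a b R' C'); split => //.
  + exact: ltnW s2.
  + by move=> k; rewrite /R' modnDr.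
  + by move=> k; rewrite /C' modnDr.
  + move=> k; rewrite /R' /C'; case: eqP => [->|_] //; by rewrite addn0.
  + move=> k; rewrite /R' /C'.
    have s0 : 0 < s := ltnW s2.
    case: (modS_cases k s0) => [[-> _]|[-> E2]] /=.
      by rewrite addnS.
    have -> : i + s = (i + k %% s).+1 by rewrite -[in LHS]E2 addnS.
    exact: Hb.
- (* chord b : walk of length (t - s).+1 *)
  pose g u := if u == 0 then 0 else (s + u).-1.
  pose t' := (t - s).+1.
  pose R' k := R (i + g (k %% t')).
  pose C' k := C (i + g (k %% t')).
  have t't : t' < t by rewrite /t'; move/leP: s2 => ?; move/leP: st => ?; apply/leP; nlia.
  apply: (IH t' t't a b R' C'); split => //.
  + by move=> k; rewrite /R' modnDr.
  + by move=> k; rewrite /C' modnDr.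
  + by move=> k; rewrite /R' /C' Ha.
  + move=> k; case: (modS_cases k (ltn0Sn (t - s))) => [[E1 E2]|[E1 E2]];
    rewrite -/t' in E1 E2.
    * rewrite /R' /C' E1 /g /=; case: eqP => [->|nz].
        by rewrite addn1 /= addn0.
      have -> : i + (s + (k %% t').+1).-1 = (i + (s + k %% t').-1).+1.
        by move/ltP: s2 => ?; nlia.
      exact: Hb.
    * rewrite /R' /C' E1 /g /=.
      have nz : (k %% t' == 0) = false.
        apply/negP => /eqP E3; move: E2; rewrite E3 /t' => /eqP; rewrite eqSS => /eqP.
        move/leP: st => ?; nlia.
      rewrite nz addn0.
      have -> : i + (s + k %% t').-1 = i + t.-1.
        by congr (_ + _); move: E2; rewrite /t' => /eqP; rewrite eqSS => /eqP ->; move/leP: st => ?; nlia.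
      have -> : C i = C (i + t.-1).+1 by rewrite -addnS prednK // pC.
      exact: Hb.
Qed.

Lemma walk3 t
  (IH : forall t', t' < t -> forall a b R C, ~ walk M a b t' R C)
  (h23 : ~ has_non_wl_submatrix M 2 3) (h32 : ~ has_non_wl_submatrix M 3 2)
  a b R C : walk M a b t R C -> 2 < t -> forall i,
  [/\ M (R i) (C i.+2) != a, M (R i) (C i.+2) != b,
      M (R i.+1) (C i) != a, M (R i.+1) (C i) != b &
      M (R i) (C i.+2) != M (R i.+1) (C i) /\
      M (R i) (C i.+2) != M (R i.+2) (C i.+1)].
Proof.
move=> W t3 i.
have Wc := walk_chord IH W.
have Wn := walk_neq W.
case: W => ab t0 pR pC Ha Hb.
have [xa xb] : M (R i) (C i.+2) != a /\ M (R i) (C i.+2) != b.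
  by have := Wc i 2 (leqnn 2) t3; rewrite addn2.
have [ya yb] : M (R i.+1) (C i) != a /\ M (R i.+1) (C i) != b.
  have -> : C i = C (i.+1 + (t - 1)).
    by rewrite -(pC i); congr C; move/ltP: t3 => ?; nlia.
  by apply: Wc; move/ltP: t3 => ?; apply/leP; nlia.
have [R01 C01] := Wn i; have [R12 C12] := Wn i.+1.
split => //; split.
- apply/negP => /eqP Exy; apply: h23.
  apply: (@nonwl_23 _ _ M (R i) (R i.+1) (C i) (C i.+1) (C i.+2) a b (M (R i) (C i.+2))) => //.
  by apply/negP => /eqP E; move: xa; rewrite -E Ha eqxx.
- apply/negP => /eqP Exy; apply: h32.
  apply: (@nonwl_32 _ _ M (R i) (R i.+1) (R i.+2) (C i.+1) (C i.+2) b a (M (R i) (C i.+2))) => //.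
  + by apply/negP => /eqP E; move: xa; rewrite E Ha eqxx.
  + by rewrite eq_sym.
Qed.
End Walk.

Lemma no_walk m n (M : 'M['I_4]_(m, n))
  (h22 : ~ has_non_wl_submatrix M 2 2) (h23 : ~ has_non_wl_submatrix M 2 3)
  (h32 : ~ has_non_wl_submatrix M 3 2) :
  forall t a b R C, ~ walk M a b t R C.
Proof.
elim/ltn_ind => t IH a b R C W.
have Wn := walk_neq W.
have W3 := walk3 IH h23 h32 W.
have Wc := walk_chord IH W.
case: (W) => ab t0 pR pC Ha Hb.
have [t1|[t2|t3]] : t = 1 \/ t = 2 \/ 2 < t.
- by case: t t0 {IH W W3 Wc pR pC} => [|[|[|t]]] //; auto.
- have E : C 1 = C 0 by rewrite -(pC 0) t1.
  by move: (Hb 0); rewrite E Ha => /eqP; rewrite (negbTE ab).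
- have [R01 C01] := Wn 0.
  apply: h22; apply: (@nonwl_22 _ _ M (R 0) (R 1) (C 0) (C 1) a b) => //.
  by rewrite -(pC 0) t2 add0n.
pose y0 := M (R 1) (C 0); pose c := M (R 0) (C 2).
have [ca cb y0a y0b [cy0 _]] := W3 t3 0.
have Yc : forall i, M (R i.+1) (C i) = y0.
  elim => [|i IHi] //; rewrite -IHi.
  have [xa xb ya yb [xy xy']] := W3 t3 i.
  apply: (@pig a b (M (R i) (C i.+2))) => //; try by rewrite eq_sym.
  have [_ _ ya' yb' _] := W3 t3 i.+1 => //.
  by have [_ _ ya' yb' _] := W3 t3 i.+1.
have Xc : forall i, M (R i) (C i.+2) = c.
  move=> i; have [xa xb _ _ [xy _]] := W3 t3 i.
  rewrite Yc in xy.
  apply: (@pig a b y0) => //; by rewrite eq_sym.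
have [t3'|t4] : t = 3 \/ 3 < t.
  by move: t3; rewrite leq_eqVlt => /orP [/eqP <-|]; auto.
  have E3 : R 3 = R 0 by rewrite -(pR 0) t3'.
  have := Yc 2; rewrite E3 -/c => E.
  by move: cy0; rewrite -/c -/y0 E eqxx.
have W' : walk M a c t (fun k => R k.*2) (fun k => C k.*2).
  split.
  - by rewrite eq_sym.
  - by [].
  - by move=> k; rewrite doubleD -(addnn t) addnA !pR.
  - by move=> k; rewrite doubleD -(addnn t) addnA !pC.
  - by move=> k; apply: Ha.
  - by move=> k; rewrite doubleS Xc.
have [x'a x'c y'a y'c [x'y' _]] := walk3 IH h23 h32 W' t3 0.
rewrite /= in x'a x'c y'a y'c x'y'.
have [t4'|t5] : t = 4 \/ 4 < t.
  by move: t4; rewrite leq_eqVlt => /orP [/eqP <-|]; auto.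
  have E4 : C 4 = C 0 by rewrite -(pC 0) t4'.
  by move: x'a; rewrite E4 Ha eqxx.
have [y'a2 y'b] : M (R 2) (C 0) != a /\ M (R 2) (C 0) != b.
  have -> : C 0 = C (2 + (t - 2)).
    by rewrite -(pC 0) add0n; congr C; move/ltP: t3 => ?; nlia.
  by apply: Wc; move/ltP: t5 => ?; apply/leP; nlia.
have [x'a2 x'b] : M (R 0) (C 4) != a /\ M (R 0) (C 4) != b.
  by have := Wc 0 4 isT t5; rewrite add0n.
have Ey : M (R 2) (C 0) = y0.
  apply: (@pig a b c) => //; by rewrite eq_sym.
have Ex : M (R 0) (C 4) = y0.
  apply: (@pig a b c) => //; by rewrite eq_sym.
by move: x'y'; rewrite Ex Ey eqxx.
Qed.

Lemma cycle_walk m n (M : 'M['I_4]_(m, n)) s :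
  is_cycle M s -> 6 <= size s -> exists a b t R C, walk M a b t R C.
Proof.
case: s => [//|x0 s1]; set s := x0 :: s1 => Hc Hs.
set k := size s.
have k0 : 0 < k by apply: leq_trans Hs.
set s' := s ++ take 2 s.
have sz : size s' = k + 2 by rewrite size_cat size_takel // (leq_trans _ Hs).
case: Hc => _ [c1 [c2 [a [b [ab c3]]]]].
rewrite -/s' in c1 c2 c3.
have Hv l : l < k + 2 -> M (nth x0 s' l).1 (nth x0 s' l).2 = if odd l then b else a.
  move=> lk; have := congr1 (nth a ^~ l) c3.
  by rewrite (nth_map x0) ?sz // (nth_map 0) ?size_iota ?sz // nth_iota ?sz.
have Hl1 l : l < k + 1 -> same_line (nth x0 s' l) (nth x0 s' l.+1).
  move=> lk; move/(all_nthP (x0, x0)): c1 => /(_ l).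
  rewrite size_zip size_behead sz nth_zip_cond size_zip size_behead sz /=.
  have -> : minn (k + 2) (k + 2).-1 = k + 1 by rewrite addn2 /= addn1 (minn_idPr (leqnSn _)).
  by rewrite lk => /(_ isT).
have Hl2 l : l < k -> 
  ~~ (((nth x0 s' l).1 == (nth x0 s' l.+1).1) && ((nth x0 s' l.+1).1 == (nth x0 s' l.+2).1)) &&
  ~~ (((nth x0 s' l).2 == (nth x0 s' l.+1).2) && ((nth x0 s' l.+1).2 == (nth x0 s' l.+2).2)).
  move=> lk; move/(all_nthP (x0, (x0, x0))): c2 => /(_ l).
  have Hsz : size (zip s' (zip (behead s') (behead (behead s')))) = k.
    rewrite !size_zip !size_behead sz addn2 /=.
    by rewrite (minn_idPr (leqnSn k)); apply/minn_idPr; exact: leqW (leqnSn k).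
  rewrite Hsz nth_zip_cond Hsz lk.
  have Hsz2 : l < size (zip (behead s') (behead (behead s'))).
    rewrite size_zip !size_behead sz addn2 /= (minn_idPr (leqnSn k)) //.
  by rewrite nth_zip_cond Hsz2 /= nth_behead => /(_ isT).
pose P l := nth x0 s (l %% k).
have HP l : l < k + 2 -> nth x0 s' l = P l.
  move=> lk; rewrite /s' nth_cat -/k /P.
  case: ltnP => lk2.
    by rewrite modn_small.
  rewrite nth_take; last by apply/leP; move/leP: lk2; move/leP: lk; nlia.
  congr nth.
  rewrite -{2}(subnK lk2) modnDr modn_small //; apply/leP; move/leP: lk2; move/leP: lk; move/leP: Hs; nlia.
have Pm l j : P (l %% k + j) = P (l + j) by rewrite /P modnDml.
have Pk l : P (l + k) = P l by rewrite /P modnDr.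
have Pmod l : P (l %% k) = P l by rewrite /P modn_mod.
have evk : ~~ odd k.
  have Hk2 : k < k + 2 by rewrite addn2 ltnS leqW.
  have H0 := Hv 0 (ltn_addr 2 k0); rewrite /= in H0.
  have := Hv k Hk2; rewrite HP // /P modnn; change (nth x0 s 0) with x0; rewrite H0.
  by case: (odd k) => // /eqP; rewrite (negbTE ab).
have G3 l : M (P l).1 (P l).2 = if odd l then b else a.
  have hl : l %% k < k + 2 by apply: ltn_addr; rewrite ltn_pmod.
  have := Hv _ hl; rewrite HP // Pmod => ->.
  congr (if _ then _ else _).
  by rewrite {2}(divn_eq l k) oddD oddM (negbTE evk) andbF.
have hk l : l %% k < k := ltn_pmod l k0.
have G1 l : same_line (P l) (P l.+1).
  have h1 : l %% k < k + 1 by move: (hk l) => /ltP h; apply/ltP; nlia.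
  have h2 : l %% k < k + 2 by move: (hk l) => /ltP h; apply/ltP; nlia.
  have h3 : (l %% k).+1 < k + 2 by move: (hk l) => /ltP h; apply/ltP; nlia.
  by have := Hl1 _ h1; rewrite !HP // Pmod -addn1 Pm addn1.
have G2 l : ~~ (((P l).1 == (P l.+1).1) && ((P l.+1).1 == (P l.+2).1)) &&
            ~~ (((P l).2 == (P l.+1).2) && ((P l.+1).2 == (P l.+2).2)).
  have h2 : l %% k < k + 2 by move: (hk l) => /ltP h; apply/ltP; nlia.
  have h3 : (l %% k).+1 < k + 2 by move: (hk l) => /ltP h; apply/ltP; nlia.
  have h4 : (l %% k).+2 < k + 2 by move: (hk l) => /ltP h; apply/ltP; nlia.
  have E1 : P (l %% k).+1 = P l.+1 by rewrite -addn1 Pm addn1.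
  have E2 : P (l %% k).+2 = P l.+2 by rewrite -addn2 Pm addn2.
  by have := Hl2 _ (hk l); rewrite !HP // Pmod E2 E1.
pose row l := (P l).1 == (P l.+1).1.
pose col l := (P l).2 == (P l.+1).2.
have D2 l : row l = ~~ col l.
  have Vl := G3 l; have Vl1 := G3 l.+1; rewrite /= in Vl1.
  have := G1 l; rewrite /same_line -/(row l) -/(col l).
  case Hr: (row l); case Hc: (col l) => //= _.
  move: Vl Vl1 Hr Hc; rewrite /row /col.
  case: (P l) => x y; case: (P l.+1) => x' y' /= V1 V2 /eqP E1 /eqP E2; subst.
  by move: V1; rewrite V2; case: (odd l) => /eqP; rewrite ?(negbTE ab) // eq_sym (negbTE ab).
have D3 l : row l.+1 = ~~ row l.
  move: (G2 l) (D2 l) (D2 l.+1); rewrite /row /col.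
  case: ((P l).1 == (P l.+1).1); case: ((P l.+1).1 == (P l.+2).1);
  case: ((P l).2 == (P l.+1).2); case: ((P l.+1).2 == (P l.+2).2) => //.
have D4 l : row l = odd l (+) row 0.
  elim: l => [|l IH] //=; rewrite D3 IH.
  by case: (odd l); case: (row 0).
have kd : (k./2).*2 = k by rewrite -[RHS]odd_double_half (negbTE evk).
have t0 : 0 < k./2 by rewrite half_gt0; apply: leq_trans Hs.
have Pper j : P (j + k./2).*2 = P j.*2 by rewrite doubleD kd Pk.
case R0 : (row 0).
- exists a, b, k./2, (fun j => (P j.*2).1), (fun j => (P j.*2).2); split => //.
  + by move=> j; rewrite Pper.
  + by move=> j; rewrite Pper.
  + by move=> j; rewrite G3 odd_double.
  + move=> j.
    have r1 : row j.*2 by rewrite D4 odd_double R0.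
    have cc2 : col j.*2.+1 by rewrite -[col _]negbK -D2 D4 /= odd_double R0.
    move/eqP: r1 => ->; move/eqP: cc2; rewrite doubleS => <-.
    by rewrite G3 /= odd_double.
- exists b, a, k./2, (fun j => (P j.*2.+1).1), (fun j => (P j.*2.+1).2); split => //.
  + by rewrite eq_sym.
  + by move=> j; rewrite doubleD kd -addSn Pk.
  + by move=> j; rewrite doubleD kd -addSn Pk.
  + by move=> j; rewrite G3 /= odd_double.
  + move=> j.
    have r1 : row j.*2.+1 by rewrite D4 /= odd_double R0.
    have cc2 : col j.*2.+2 by rewrite -[col _]negbK -D2 D4 /= odd_double R0.
    move/eqP: r1 => ->; move/eqP: cc2; rewrite doubleS => <-.
    by rewrite G3 /= odd_double.
Qed.


Theorem theorem3p10 (m n : nat) (M : 'M['I_4]_(m, n)) :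
  (exists s : seq ('I_m * 'I_n), is_cycle M s /\ 6 <= size s) ->
  has_non_wl_submatrix M 2 2 \/ has_non_wl_submatrix M 2 3 \/
  has_non_wl_submatrix M 3 2.
Proof.
move=> [s [Hc Hs]].
have [a [b [t [R [C W]]]]] := cycle_walk Hc Hs.
case: (classic (has_non_wl_submatrix M 2 2)) => [h|h22]; first by left.
case: (classic (has_non_wl_submatrix M 2 3)) => [h|h23]; first by right; left.
case: (classic (has_non_wl_submatrix M 3 2)) => [h|h32]; first by right; right.
by case: (no_walk h22 h23 h32 W).
Qed.
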